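(* Let $f$ be an element of the commutator subgroup of $F(\mathcal{R}[t,t^{-1}])$, expanded as $f=\sum_{i\ge0}(t-1)^iA_i$ with $A_i\in M_2(\mathcal{R})$. Then for every $i\ge1$, all entries of $A_i$ lie in $\Sigma$.
   Context: $\mathcal{R}=\mathbb{Z}[x,x^{-1},y,y^{-1}]$; $\Sigma$ is the augmentation ideal of $\mathcal{R}$ (kernel of $x,y\mapsto1$ to $\mathbb{Z}$). $F(\mathcal{R}[t,t^{-1}])$ is the subgroup of $GL_2(\mathcal{R}[t,t^{-1}])$ generated by $M_1=\begin{pmatrix}1&1-y\\0&x\end{pmatrix}$ and $M_2T=\begin{pmatrix}yt&0\\1-xt&1\end{pmatrix}$. Via $t=1+s$, $t^{-1}=\sum_{i\ge0}(-s)^i$, $\mathcal{R}[t,t^{-1}]$ embeds in the power series ring $\mathcal{R}[[s]]$, so each matrix over $\mathcal{R}[t,t^{-1}]$ has a unique expansion $\sum_{i\ge0}(t-1)^iA_i$ with $A_i$ matrices over $\mathcal{R}$ ($A_0$ is the matrix obtained by setting $t=1$). *)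

(* Defs.v *)
From HB Require Import structures.
From mathcomp Require Import all_boot all_order all_algebra.
Set Implicit Arguments. Unset Strict Implicit. Unset Printing Implicit Defensive.
Import Order.TTheory GRing.Theory Num.Theory.
Local Open Scope ring_scope.

(* The ring R = Z[x,x^-1,y,y^-1] is realised inside the field             *)
(*   K = Frac(Z[x,y]) = {fraction {poly {poly int}}}                        *)
(* where x is the inner variable and y the outer variable.                *)
Definition Pxy := {poly {poly int}}.
Definition K := {fraction Pxy}.

Definition xK : K := tofrac (('X : {poly int})%:P : Pxy).
Definition yK : K := tofrac ('X : Pxy).

Definition aug (p : Pxy) : int := (p.[1]).[1].

Definition inR (r : K) : Prop :=
  exists (p : Pxy) (a b : nat), r = tofrac p / (xK ^+ a * yK ^+ b).

(* Sigma = augmentation ideal of R = kernel of x,y |-> 1.  For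
   r = p / (x^a y^b) one has eps(r) = p(1,1). *)
Definition inSigma (r : K) : Prop :=
  exists (p : Pxy) (a b : nat),
    r = tofrac p / (xK ^+ a * yK ^+ b) /\ aug p = 0.

(* R[t,t^-1] is realised inside L = Frac(K[t]) = {fraction {poly K}}.      *)
Definition L := {fraction {poly K}}.
Definition tL : L := tofrac ('X : {poly K}).
Definition cL (r : K) : L := tofrac (r%:P).

Definition laurent_rep (g : L) (P : {poly K}) (k : nat) : Prop :=
  (forall j, inR P`_j) /\ g = tofrac P / tL ^+ k.

(* Coefficient of s^m in (1+s)^{-k} : (-1)^m * binomial(k+m-1, m). *)
Definition negbinom (k m : nat) : int := (-1) ^+ m * ('C(k + m - 1, m))%:Z.

(* Coefficient of (t-1)^i in the expansion of P(t) t^{-k} in R[[s]],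
   t = 1 + s, t^{-1} = sum_i (-s)^i : the Cauchy product of the
   coefficients of P(1+s) and of (1+s)^{-k}. *)
Definition exp_coef (P : {poly K}) (k i : nat) : K :=
  \sum_(j < i.+1) (P \Po ('X + 1))`_j * (negbinom k (i - j))%:~R.

Definition M1 : 'M[L]_2 :=
  \matrix_(i < 2, j < 2)
    if (i == 0) && (j == 0) then 1
    else if (i == 0) && (j == 1) then 1 - cL yK
    else if (i == 1) && (j == 0) then 0
    else cL xK.

Definition M2T : 'M[L]_2 :=
  \matrix_(i < 2, j < 2)
    if (i == 0) && (j == 0) then cL yK * tL
    else if (i == 0) && (j == 1) then 0
    else if (i == 1) && (j == 0) then 1 - cL xK * tL
    else 1.

Inductive gen_group (S : 'M[L]_2 -> Prop) : 'M[L]_2 -> Prop :=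
| gg_gen g : S g -> gen_group S g
| gg_one : gen_group S 1%:M
| gg_mul g h : gen_group S g -> gen_group S h -> gen_group S (g *m h)
| gg_inv g : gen_group S g -> gen_group S (invmx g).

Definition Fgrp : 'M[L]_2 -> Prop :=
  gen_group (fun g => g = M1 \/ g = M2T).

Definition comm_subgroup (G : 'M[L]_2 -> Prop) : 'M[L]_2 -> Prop :=
  gen_group (fun c => exists g h, G g /\ G h /\
                       c = invmx g *m invmx h *m g *m h).

(* Main.v *)
Require Import Defs.
From HB Require Import structures.
From mathcomp Require Import all_boot all_order all_algebra.
From mathcomp Require Import ring zify.
Set Implicit Arguments. Unset Strict Implicit. Unset Printing Implicit Defensive.
Import Order.TTheory GRing.Theory Num.Theory.
Local Open Scope ring_scope.

Definition mk2 (R : comNzRingType) (a b c d : R) : 'M[R]_2 :=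
  \matrix_(i < 2, j < 2) if val i == 0%N then (if val j == 0%N then a else b)
                         else (if val j == 0%N then c else d).
Definition o1 : 'I_2 := @Ordinal 2 1 isT.

Lemma mk2E (R : comNzRingType) (A : 'M[R]_2) : A = mk2 (A ord0 ord0) (A ord0 o1) (A o1 ord0) (A o1 o1).
Proof.
apply/matrixP => i j; rewrite !mxE.
case: i => [[|[|//]] Hi]; case: j => [[|[|//]] Hj] /=; congr (A _ _); exact: val_inj.
Qed.

Lemma mk2_mul (R : comNzRingType) (a b c d a' b' c' d' : R) :
  mk2 a b c d *m mk2 a' b' c' d' =
  mk2 (a*a' + b*c') (a*b' + b*d') (c*a' + d*c') (c*b' + d*d').
Proof.
apply/matrixP => i j; rewrite !mxE !big_ord_recl big_ord0 addr0 !mxE /=.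
by case: i => [[|[|//]] Hi]; case: j => [[|[|//]] Hj].
Qed.

Lemma mk2_scale (R : comNzRingType) (e a b c d : R) : e *: mk2 a b c d = mk2 (e*a) (e*b) (e*c) (e*d).
Proof.
apply/matrixP => i j; rewrite !mxE.
by case: i => [[|[|//]] Hi]; case: j => [[|[|//]] Hj].
Qed.

Lemma mk2_scalar (R : comNzRingType) (e : R) : e%:M = mk2 e 0 0 e.
Proof.
apply/matrixP => i j; rewrite !mxE.
by case: i => [[|[|//]] Hi]; case: j => [[|[|//]] Hj].
Qed.

Lemma mk2_1 (R : comNzRingType) : 1%:M = mk2 1 0 0 1 :> 'M[R]_2.
Proof. exact: mk2_scalar. Qed.

Lemma mk2_inj (R : comNzRingType) (a b c d a' b' c' d' : R) : mk2 a b c d = mk2 a' b' c' d' ->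
  [/\ a = a', b = b', c = c' & d = d'].
Proof.
move/matrixP => H.
have := H ord0 ord0; have := H ord0 o1; have := H o1 ord0; have := H o1 o1.
by rewrite !mxE /=.
Qed.

Lemma mk2_entry (R : comNzRingType) (a b c d : R) (i j : 'I_2) :
  mk2 a b c d i j = if val i == 0%N then (if val j == 0%N then a else b)
                         else (if val j == 0%N then c else d).
Proof. by rewrite mxE. Qed.

Definition adj2 (R : comNzRingType) (A : 'M[R]_2) : 'M[R]_2 :=
  mk2 (A o1 o1) (- A ord0 o1) (- A o1 ord0) (A ord0 ord0).
Definition d2 (R : comNzRingType) (A : 'M[R]_2) : R := A ord0 ord0 * A o1 o1 - A ord0 o1 * A o1 ord0.

Lemma adj2_mk2 (R : comNzRingType) (a b c d : R) : adj2 (mk2 a b c d) = mk2 d (-b) (-c) a.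
Proof. by rewrite /adj2 !mxE. Qed.
Lemma d2_mk2 (R : comNzRingType) (a b c d : R) : d2 (mk2 a b c d) = a * d - b * c.
Proof. by rewrite /d2 !mxE. Qed.



Lemma mk2_map (R S : comNzRingType) (f : R -> S) a b c d :
  map_mx f (mk2 a b c d) = mk2 (f a) (f b) (f c) (f d).
Proof.
apply/matrixP => i j; rewrite !mxE.
by case: i => [[|[|//]] Hi]; case: j => [[|[|//]] Hj].
Qed.

Definition PP := {poly Pxy}.
Definition emb : PP -> L := fun P => tofrac (map_poly (@tofrac Pxy) P).
Lemma emb_zmod : zmod_morphism emb.
Proof. by move=> a b; rewrite /emb !rmorphB. Qed.
HB.instance Definition _ := GRing.isZmodMorphism.Build _ _ emb emb_zmod.
Lemma emb_monoid : monoid_morphism emb.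
Proof. by split; rewrite /emb ?rmorph1 // => a b; rewrite !rmorphM. Qed.
HB.instance Definition _ := GRing.isMonoidMorphism.Build _ _ emb emb_monoid.
Definition auge : Pxy -> int := fun p => (p.[1]).[1].
Lemma auge_zmod : zmod_morphism auge.
Proof. by move=> a b; rewrite /auge !hornerE. Qed.
HB.instance Definition _ := GRing.isZmodMorphism.Build _ _ auge auge_zmod.
Lemma auge_monoid : monoid_morphism auge.
Proof. by split; rewrite /auge ?hornerE // => a b; rewrite !hornerE. Qed.
HB.instance Definition _ := GRing.isMonoidMorphism.Build _ _ auge auge_monoid.
Definition eps : PP -> {poly int} := map_poly auge.
Lemma eps_zmod : zmod_morphism eps.
Proof. by move=> a b; rewrite /eps !rmorphB. Qed.
HB.instance Definition _ := GRing.isZmodMorphism.Build _ _ eps eps_zmod.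
Lemma eps_monoid : monoid_morphism eps.
Proof. by split; rewrite /eps ?rmorph1 // => a b; rewrite !rmorphM. Qed.
HB.instance Definition _ := GRing.isMonoidMorphism.Build _ _ eps eps_monoid.
Lemma emb_inj : injective emb.
Proof. move=> a b /eqP; rewrite /emb tofrac_eq => /eqP. apply: map_inj_poly.
 by move=> x y /eqP; rewrite tofrac_eq => /eqP. by rewrite rmorph0. Qed.

Definition Xx : Pxy := ('X : {poly int})%:P.
Definition Xy : Pxy := 'X.
Definition mono (a b k : nat) : PP := (Xx ^+ a * Xy ^+ b)%:P * 'X^k.
Definition isMono (D : PP) := exists a b k, D = mono a b k.

Lemma monoM a b k a' b' k' : mono a b k * mono a' b' k' = mono (a+a') (b+b') (k+k').
Proof. rewrite /mono !exprD !rmorphM /=; ring. Qed.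

Lemma isMonoM D D' : isMono D -> isMono D' -> isMono (D * D').
Proof. by move=> [a [b [k ->]]] [a' [b' [k' ->]]]; rewrite monoM; do 3 eexists. Qed.

Lemma isMono1 : isMono 1.
Proof. exists 0%N, 0%N, 0%N; by rewrite /mono !expr0 mulr1 mul1r. Qed.

Lemma mono_neq0 D : isMono D -> D != 0.
Proof.
move=> [a [b [k ->]]]; rewrite /mono mulf_neq0 ?expf_neq0 ?polyX_eq0 //.
by rewrite polyC_eq0 mulf_neq0 ?expf_neq0 ?polyX_eq0 // polyC_eq0 polyX_eq0.
Qed.

Lemma embC c : emb c%:P = cL (tofrac c).
Proof. by rewrite /emb map_polyC. Qed.
Lemma embX : emb 'X = tL.
Proof. by rewrite /emb map_polyX. Qed.

Lemma emb_mono a b k : emb (mono a b k) = cL (xK ^+ a * yK ^+ b) * tL ^+ k.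
Proof. by rewrite /mono rmorphM rmorphXn /= embX embC rmorphM !rmorphXn. Qed.

Lemma emb_neq0 D : isMono D -> emb D != 0.
Proof. move=> /mono_neq0; apply: contra => /eqP H; apply/eqP; apply: emb_inj; by rewrite H rmorph0. Qed.

Lemma eps_mono a b k : eps (mono a b k) = 'X^k.
Proof.
rewrite /mono rmorphM rmorphXn /= /eps map_polyX map_polyC /= /auge.
by rewrite !hornerE !expr1n mulr1 mul1r.
Qed.

Definition rep (f : 'M[L]_2) (N : 'M[PP]_2) (D : PP) :=
  f = (emb D)^-1 *: map_mx emb N /\ isMono D /\ isMono (d2 N).

Lemma d2_mul (R : comNzRingType) (A B : 'M[R]_2) : d2 (A *m B) = d2 A * d2 B.
Proof. rewrite (mk2E A) (mk2E B) mk2_mul !d2_mk2; ring. Qed.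

Lemma d2_scale_adj (R : comNzRingType) (e : R) (A : 'M[R]_2) :
  d2 (e *: adj2 A) = e ^+ 2 * d2 A.
Proof. rewrite (mk2E A) adj2_mk2 mk2_scale !d2_mk2; ring. Qed.

Lemma rep_mul f g N1 D1 N2 D2 : rep f N1 D1 -> rep g N2 D2 ->
  rep (f *m g) (N1 *m N2) (D1 * D2).
Proof.
move=> [-> [M1 M1']] [-> [M2 M2']]; split; last first.
  by split; [apply: isMonoM | rewrite d2_mul; apply: isMonoM].
rewrite -scalemxAl -scalemxAr scalerA map_mxM rmorphM /= invfM.
by rewrite mulrC.
Qed.

Lemma rep_one : rep 1%:M 1%:M 1.
Proof.
split; first by rewrite map_mx1 (rmorph1 emb) invr1 scale1r.
split; first exact: isMono1.
rewrite (@mk2_1 PP) d2_mk2.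
have -> : (1 * 1 - 0 * 0 : PP) = 1 by ring.
exact: isMono1.
Qed.

Lemma mul_adj2 (R : comNzRingType) (e : R) (A : 'M[R]_2) :
  A *m (e *: adj2 A) = (e * d2 A)%:M.
Proof.
rewrite (mk2E A) adj2_mk2 mk2_scale mk2_mul d2_mk2 mk2_scalar.
by congr mk2; ring.
Qed.

Lemma map_mx_scalar2 (R S : comNzRingType) (f : {rmorphism R -> S}) (e : R) :
  map_mx f (e%:M : 'M_2) = (f e)%:M.
Proof. by rewrite !mk2_scalar mk2_map rmorph0. Qed.

Lemma rep_inv f N D : rep f N D -> rep (invmx f) (D *: adj2 N) (d2 N).
Proof.
move=> [Hf [MD MN]].
set g := (emb (d2 N))^-1 *: map_mx emb (D *: adj2 N).
have Hfg : f *m g = 1%:M.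
  rewrite Hf /g -scalemxAl -scalemxAr scalerA -map_mxM mul_adj2.
  rewrite (map_mx_scalar2 emb) scale_scalar_mx rmorphM /=.
  have h1 := emb_neq0 MD; have h2 := emb_neq0 MN.
  congr (_%:M); by rewrite mulrACA (mulVf h1) (mulVf h2) mulr1.
have [Uf _] := mulmx1_unit Hfg.
have -> : invmx f = g by rewrite -[RHS](mulKmx Uf) Hfg mulmx1.
split=> //; split=> //.
rewrite d2_scale_adj; apply: isMonoM => //; rewrite expr2; exact: isMonoM.
Qed.
Lemma mk2_if (R : comNzRingType) (a b c d : R) :
  (\matrix_(i < 2, j < 2)
    if (i == 0) && (j == 0) then a
    else if (i == 0) && (j == 1) then b
    else if (i == 1) && (j == 0) then c
    else d) = mk2 a b c d.
Proof.
apply/matrixP => i j; rewrite !mxE.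
by case: i => [[|[|//]] Hi]; case: j => [[|[|//]] Hj].
Qed.
Lemma M1E : M1 = mk2 1 (1 - cL yK) 0 (cL xK).
Proof. exact: mk2_if. Qed.
Lemma M2TE : M2T = mk2 (cL yK * tL) 0 (1 - cL xK * tL) 1.
Proof. exact: mk2_if. Qed.

Definition shp (B : 'M[{poly int}]_2) := exists p s, B = mk2 p 0 (s - p) s.

Lemma map_eps_scale_adj D N :
  map_mx eps (D *: adj2 N) = eps D *: adj2 (map_mx eps N).
Proof.
rewrite (mk2E N) adj2_mk2 mk2_scale !mk2_map adj2_mk2 mk2_scale.
congr mk2; rewrite rmorphM ?rmorphN //.
Qed.

Lemma eps_d2 N : eps (d2 N) = d2 (map_mx eps N).
Proof. by rewrite (mk2E N) d2_mk2 mk2_map d2_mk2 rmorphB !rmorphM. Qed.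

Lemma shp_mul A B : shp A -> shp B -> shp (A *m B).
Proof.
move=> [p [s ->]] [p' [s' ->]]; exists (p * p'), (s * s').
rewrite mk2_mul; congr mk2; ring.
Qed.

Lemma shp_scale_adj e A : shp A -> shp (e *: adj2 A).
Proof.
move=> [p [s ->]]; exists (e * s), (e * p).
rewrite adj2_mk2 mk2_scale; congr mk2; ring.
Qed.

Definition InvF f := exists N D, rep f N D /\ shp (map_mx eps N).
Definition InvC f := exists N D, rep f N D /\ map_mx eps N = (eps D)%:M.

Lemma InvF_one : InvF 1%:M.
Proof.
exists 1%:M, 1; split; first exact: rep_one.
rewrite (map_mx_scalar2 eps) (rmorph1 eps); exists 1, 1.
rewrite mk2_scalar; congr mk2; ring.
Qed.

Lemma InvF_mul f g : InvF f -> InvF g -> InvF (f *m g).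
Proof.
move=> [N1 [D1 [R1 S1]]] [N2 [D2 [R2 S2]]].
exists (N1 *m N2), (D1 * D2); split; first exact: rep_mul.
rewrite map_mxM; exact: shp_mul.
Qed.

Lemma InvF_inv f : InvF f -> InvF (invmx f).
Proof.
move=> [N [D [R S]]]; exists (D *: adj2 N), (d2 N); split; first exact: rep_inv.
rewrite map_eps_scale_adj; exact: shp_scale_adj.
Qed.

Lemma InvF_M1 : InvF M1.
Proof.
exists (mk2 1 (1 - (Xy)%:P) 0 (Xx%:P)), 1; split; last first.
  rewrite mk2_map; exists 1, 1; congr mk2.
  - exact: rmorph1.
  - rewrite rmorphB rmorph1 /= /eps map_polyC /= /auge /Xy !hornerE; ring.
  - by rewrite rmorph0 subrr.
  - by rewrite /eps map_polyC /= /auge /Xx !hornerE.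
split; last split; first last.
- rewrite d2_mk2; exists 1%N, 0%N, 0%N; rewrite /mono; ring.
- exact: isMono1.
rewrite (rmorph1 emb) invr1 scale1r mk2_map M1E; congr mk2.
- by rewrite rmorph1.
- by rewrite rmorphB rmorph1 /= embC.
- by rewrite rmorph0.
- by rewrite embC.
Qed.

Lemma InvF_M2T : InvF M2T.
Proof.
exists (mk2 ((Xy)%:P * 'X) 0 (1 - Xx%:P * 'X) 1), 1; split; last first.
  rewrite mk2_map; exists 'X, 1; congr mk2.
  - rewrite rmorphM /= /eps map_polyC map_polyX /= /auge /Xy !hornerE; ring.
  - exact: rmorph0.
  - rewrite rmorphB rmorph1 rmorphM /= /eps map_polyC map_polyX /= /auge /Xx !hornerE; ring.
  - exact: rmorph1.
split; last split; first last.
- rewrite d2_mk2; exists 0%N, 1%N, 1%N; rewrite /mono; ring.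
- exact: isMono1.
rewrite (rmorph1 emb) invr1 scale1r mk2_map M2TE; congr mk2.
- by rewrite rmorphM /= embC embX.
- by rewrite rmorph0.
- by rewrite rmorphB rmorph1 rmorphM /= embC embX.
- by rewrite rmorph1.
Qed.

Lemma InvF_F f : Fgrp f -> InvF f.
Proof.
elim=> [g [->|->]||g h _ Hg _ Hh|g _ Hg].
- exact: InvF_M1.
- exact: InvF_M2T.
- exact: InvF_one.
- exact: InvF_mul.
- exact: InvF_inv.
Qed.
Lemma InvC_one : InvC 1%:M.
Proof. exists 1%:M, 1; split; [exact: rep_one | exact: map_mx_scalar2]. Qed.

Lemma InvC_mul f g : InvC f -> InvC g -> InvC (f *m g).
Proof.
move=> [N1 [D1 [R1 S1]]] [N2 [D2 [R2 S2]]].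
exists (N1 *m N2), (D1 * D2); split; first exact: rep_mul.
by rewrite map_mxM S1 S2 -scalar_mxM (rmorphM eps).
Qed.

Lemma scal_adj_scalar (R : comNzRingType) (e : R) :
  e *: adj2 (e%:M) = (d2 (e%:M))%:M.
Proof. rewrite !mk2_scalar adj2_mk2 mk2_scale d2_mk2; congr mk2; ring. Qed.

Lemma InvC_inv f : InvC f -> InvC (invmx f).
Proof.
move=> [N [D [R S]]]; exists (D *: adj2 N), (d2 N); split; first exact: rep_inv.
by rewrite map_eps_scale_adj eps_d2 S scal_adj_scalar.
Qed.

Lemma comm_identity (R : comNzRingType) (eg eh p s p' s' : R) :
  (eg *: adj2 (mk2 p 0 (s - p) s)) *m (eh *: adj2 (mk2 p' 0 (s' - p') s'))
     *m mk2 p 0 (s - p) s *m mk2 p' 0 (s' - p') s' =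
  ((d2 (mk2 p 0 (s - p) s)) * (d2 (mk2 p' 0 (s' - p') s')) * eg * eh)%:M.
Proof. rewrite !adj2_mk2 !mk2_scale !mk2_mul !d2_mk2 mk2_scalar; congr mk2; ring. Qed.

Lemma InvC_gen c : (exists g h, Fgrp g /\ Fgrp h /\
                       c = invmx g *m invmx h *m g *m h) -> InvC c.
Proof.
move=> [g [h [/InvF_F [Ng [Dg [Rg [p [s Sg]]]]] [/InvF_F [Nh [Dh [Rh [p' [s' Sh]]]]] ->]]]].
exists ((Dg *: adj2 Ng) *m (Dh *: adj2 Nh) *m Ng *m Nh), (d2 Ng * d2 Nh * Dg * Dh).
split.
  apply: rep_mul => //; apply: rep_mul => //; apply: rep_mul; exact: rep_inv.
rewrite !map_mxM !map_eps_scale_adj Sg Sh !(rmorphM eps) /= !eps_d2 Sg Sh.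
exact: comm_identity.
Qed.

Lemma InvC_C f : comm_subgroup Fgrp f -> InvC f.
Proof.
elim=> [g Hg||g h _ Hg _ Hh|g _ Hg].
- exact: InvC_gen.
- exact: InvC_one.
- exact: InvC_mul.
- exact: InvC_inv.
Qed.
Definition conv (Rp : {poly int}) k i := \sum_(j < i.+1) Rp`_j * negbinom k (i - j).

Lemma nb0 k : negbinom k 0 = 1.
Proof. by rewrite /negbinom expr0 mul1r bin0. Qed.

Lemma nbS k m : negbinom k.+1 m.+1 + negbinom k.+1 m = negbinom k m.+1.
Proof.
rewrite /negbinom.
have -> : (k.+1 + m.+1 - 1 = (k + m).+1)%N by lia.
have -> : (k.+1 + m - 1 = k + m)%N by lia.
have -> : (k + m.+1 - 1 = k + m)%N by lia.
rewrite binS PoszD exprS; ring.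
Qed.

Lemma convS Rp k i : conv (('X + 1) * Rp) k.+1 i = conv Rp k i.
Proof.
rewrite /conv.
under eq_bigr => j _ do rewrite mulrDl coefD coefXM mul1r mulrDl.
rewrite big_split /= big_ord_recl /= mul0r add0r.
rewrite big_ord_recr /= [in RHS]big_ord_recr /= subnn !nb0 addrA -big_split /=.
congr (_ + _); apply: eq_bigr => j _.
rewrite /bump /= add1n -mulrDr add0n.
have E : (i - j = (i - j.+1).+1)%N by rewrite subnSK.
by rewrite [in X in _ + X]E [in RHS]E addrC nbS.
Qed.

Lemma conv_pow k i : conv (('X + 1) ^+ k) k i = conv 1 0 i.
Proof. by elim: k => [//|k IH]; rewrite exprS convS. Qed.

Lemma conv_main k i : (1 <= i)%N -> conv (('X + 1) ^+ k) k i = 0.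
Proof.
move=> Hi; rewrite conv_pow /conv big_ord_recl /= coefC /= mul1r.
rewrite big1 ?addr0; last by move=> j _; rewrite coefC /= mul0r.
rewrite /negbinom subn0 bin_small ?mulr0 //; lia.
Qed.

Lemma tofrac_mK a b : tofrac (Xx ^+ a * Xy ^+ b) = xK ^+ a * yK ^+ b.
Proof. by rewrite rmorphM !rmorphXn. Qed.

Lemma mK_neq0 a b : xK ^+ a * yK ^+ b != 0.
Proof.
rewrite -tofrac_mK tofrac_eq0 mulf_neq0 ?expf_neq0 //.
  by rewrite /Xx polyC_eq0 polyX_eq0.
by rewrite /Xy polyX_eq0.
Qed.

Lemma key_den_gen (R : comNzRingType) (a x u1 u2 m1 m2 t : R) :
  u1 * m1 = 1 -> u2 * m2 = 1 ->
  u1 * a * x + t * u2 = (u1 * u2) * (a * m2 * x + t * m1).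
Proof.
move=> H1 H2.
have -> : (u1 * u2) * (a * m2 * x + t * m1) = u1 * a * x * (u2 * m2) + t * u2 * (u1 * m1) by ring.
by rewrite H1 H2 !mulr1.
Qed.
Lemma key_den (A : {poly K}) (u1 u2 m1 m2 t : K) :
  u1 * m1 = 1 -> u2 * m2 = 1 ->
  u1%:P * A * 'X + (t * u2)%:P = (u1 * u2)%:P * (A * m2%:P * 'X + (t * m1)%:P).
Proof.
move=> H1 H2.
have H1' : u1%:P * m1%:P = 1 by rewrite -polyCM H1.
have H2' : u2%:P * m2%:P = 1 by rewrite -polyCM H2.
rewrite !polyCM.
exact: (@key_den_gen _ A 'X _ _ _ _ (t%:P) H1' H2').
Qed.

Lemma common_den (P : {poly K}) : (forall j, inR P`_j) ->
  exists (Q : PP) a b, P = ((xK ^+ a * yK ^+ b)^-1)%:P * map_poly (@tofrac Pxy) Q.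
Proof.
elim/poly_ind: P => [|P c IH] HP.
  by exists 0, 0%N, 0%N; rewrite rmorph0 mulr0.
have HP' : forall j, inR P`_j.
  by move=> j; have := HP j.+1; rewrite coefD coefMX coefC /= addr0.
have [Q1 [a1 [b1 E1]]] := IH HP'.
have := HP 0%N; rewrite coefD coefMX coefC /= add0r => [[p [a2 [b2 E2]]]].
exists (Q1 * (Xx ^+ a2 * Xy ^+ b2)%:P * 'X + (p * (Xx ^+ a1 * Xy ^+ b1))%:P), (a1 + a2)%N, (b1 + b2)%N.
have MQ : map_poly (@tofrac Pxy) (Q1 * (Xx ^+ a2 * Xy ^+ b2)%:P * 'X + (p * (Xx ^+ a1 * Xy ^+ b1))%:P)
   = map_poly (@tofrac Pxy) Q1 * (xK ^+ a2 * yK ^+ b2)%:P * 'X + (tofrac p * (xK ^+ a1 * yK ^+ b1))%:P.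
  rewrite rmorphD /= rmorphM /= rmorphM /= map_polyX !map_polyC /=.
  rewrite tofrac_mK; congr (_ + _%:P); rewrite -tofrac_mK; exact: rmorphM.
rewrite MQ E1 E2.
have -> : xK ^+ (a1 + a2) * yK ^+ (b1 + b2) = (xK ^+ a1 * yK ^+ b1) * (xK ^+ a2 * yK ^+ b2).
  by rewrite !exprD; ring.
rewrite (invfM (xK ^+ a1 * yK ^+ b1)).
exact: (@key_den (map_poly (@tofrac Pxy) Q1) _ _ (xK ^+ a1 * yK ^+ b1) (xK ^+ a2 * yK ^+ b2) (tofrac p)
  (mulVf (mK_neq0 _ _)) (mulVf (mK_neq0 _ _))).
Qed.

Lemma cLV (m : K) : m != 0 -> cL (m^-1) = (cL m)^-1.
Proof.
move=> hm.
exact: (fmorphV ((@tofrac {poly K}) \o (@polyC K))%function m).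
Qed.

Lemma mulrAC3 (R : comNzRingType) (u t n : R) : u * t * n = t * n * u.
Proof. ring. Qed.

Lemma laurent_form (Q : PP) a b k :
  tofrac (((xK ^+ a * yK ^+ b)^-1)%:P * map_poly (@tofrac Pxy) Q) / tL ^+ k
  = (emb (mono a b k))^-1 * emb Q.
Proof.
have T1 : tofrac (((xK ^+ a * yK ^+ b)^-1)%:P * map_poly (@tofrac Pxy) Q)
          = cL ((xK ^+ a * yK ^+ b)^-1) * emb Q by rewrite rmorphM.
rewrite T1 (cLV (mK_neq0 a b)) emb_mono invfM.
exact: mulrAC.
Qed.

Lemma cross (F : fieldType) (d d' n q : F) : d != 0 -> d' != 0 ->
  d^-1 * n = d'^-1 * q -> n * d' = q * d.
Proof.
move=> hd hd' E.
have -> : n = d * (d'^-1 * q) by rewrite -E mulrA (mulfV hd) mul1r.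
by field.
Qed.

Lemma comp_XaddC_pow (k : nat) : ('X^k : {poly int}) \Po ('X + 1) = ('X + 1) ^+ k.
Proof.
elim: k => [|k IH]; first by rewrite !expr0 comp_polyC.
by rewrite exprS comp_polyM comp_polyX IH -exprS.
Qed.

Lemma eps_Xp1 : map_poly auge ('X + 1) = 'X + 1.
Proof. by rewrite rmorphD /= map_polyX rmorph1. Qed.
Lemma tof_Xp1 : map_poly (@tofrac Pxy) ('X + 1) = 'X + 1.
Proof. by rewrite rmorphD /= map_polyX rmorph1. Qed.

Unset Implicit Arguments.

Theorem lemma5 (f : 'M[L]_2) :
  comm_subgroup Fgrp f ->
  forall (r c : 'I_2),
    (exists (P : {poly K}) (k : nat), laurent_rep (f r c) P k) /\
    (forall (P : {poly K}) (k : nat), laurent_rep (f r c) P k ->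
       forall i : nat, (1 <= i)%N -> inSigma (exp_coef P k i)).
Proof.
move=> /InvC_C [N [D [[Hf [[a [b [k HD]]] _]] HE]]] r c.
have Hfrc : f r c = (emb D)^-1 * emb (N r c) by rewrite Hf !mxE.
have HeN : eps (N r c) = 'X^k *+ (r == c).
  by have := congr1 (fun M : 'M[{poly int}]_2 => M r c) HE; rewrite !mxE HD eps_mono.
split.
  exists (((xK ^+ a * yK ^+ b)^-1)%:P * map_poly (@tofrac Pxy) (N r c)), k; split.
    move=> j; rewrite coefCM coef_map /=; exists (N r c)`_j, a, b.
    exact: mulrC.
  by rewrite laurent_form Hfrc HD.
move=> P k' [HPc HfP] i Hi.
have [Q [a' [b' EP]]] := common_den HPc.
have E3 : (emb D)^-1 * emb (N r c) = (emb (mono a' b' k'))^-1 * emb Q.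
  by rewrite -Hfrc HfP EP laurent_form.
have Hrel : N r c * mono a' b' k' = Q * D.
  apply: emb_inj; rewrite (rmorphM emb (N r c)) (rmorphM emb Q) /=.
  apply: cross E3.
    by apply: emb_neq0; exists a, b, k.
  by apply: emb_neq0; exists a', b', k'.
have HQ : eps Q = 'X^k' *+ (r == c).
  have := congr1 eps Hrel; rewrite (rmorphM eps (N r c)) (rmorphM eps Q) /= HeN HD !eps_mono.
  move=> H; apply: (mulIf (x := 'X^k)); first by rewrite expf_neq0 // polyX_eq0.
  rewrite -H; case: (r == c); first by rewrite !mulr1n mulrC.
  by rewrite !mulr0n !mul0r.
have HC : P \Po ('X + 1) = ((xK ^+ a' * yK ^+ b')^-1)%:P * map_poly (@tofrac Pxy) (Q \Po ('X + 1)).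
  by rewrite EP comp_polyM comp_polyC map_comp_poly tof_Xp1.
exists (\sum_(j < i.+1) (Q \Po ('X + 1))`_j * (negbinom k' (i - j))%:~R), a', b'.
split.
  rewrite /exp_coef.
  under eq_bigr => j _ do rewrite HC coefCM coef_map.
  rewrite rmorph_sum /= mulr_suml; apply: eq_bigr => j _.
  rewrite (rmorphM (@tofrac Pxy)) (rmorph_int (@tofrac Pxy)).
  exact: mulrAC3.
change (auge (\sum_(j < i.+1) (Q \Po ('X + 1))`_j * (negbinom k' (i - j))%:~R) = 0).
rewrite rmorph_sum.
under eq_bigr => j _ do rewrite (rmorphM auge) (rmorph_int auge) intz.
have Hc : forall j, auge (Q \Po ('X + 1))`_j = (eps (Q \Po ('X + 1)))`_j.
  by move=> j; rewrite /eps coef_map.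
have HE2 : eps (Q \Po ('X + 1)) = ('X + 1) ^+ k' *+ (r == c).
  rewrite /eps map_comp_poly /= eps_Xp1 -/(eps Q) HQ.
  by case: (r == c); [rewrite !mulr1n comp_XaddC_pow | rewrite !mulr0n comp_poly0].
rewrite (eq_bigr (fun j : 'I_i.+1 => (('X + 1) ^+ k' *+ (r == c))`_j * negbinom k' (i - j))); last first.
  by move=> j _; rewrite -HE2 -Hc.
case: (r == c).
  under eq_bigr => j _ do rewrite mulr1n.
  exact: (conv_main k' Hi).
under eq_bigr => j _ do rewrite mulr0n coef0 mul0r.
by rewrite big1.
Qed.
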